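(* Let $X,Y,P$ be Banach spaces, $F:X\times P\rightrightarrows Y$ and $G:X\rightrightarrows Y$ set-valued maps and $(\overline{x},\overline{p},\overline{y})\in X\times P\times Y$ with $\overline{y}\in F(\overline{x},\overline{p})$ and $-\overline{y}\in G(\overline{x})$. Let $S:P\rightrightarrows X$, $S(p)=\{x\in X: 0\in F(x,p)+G(x)\}$. Suppose: (i) $(F,G)$ is locally sum-stable around $(\overline{x},\overline{p},\overline{y},-\overline{y})$; (ii) $F(x,\cdot)$ is inner semicontinuous at $(\overline{p},\overline{y})$ for every $x$ in a neighborhood of $\overline{x}$; (iii) $F$ is Lipschitz-like with respect to $x$ uniformly in $p$ around $((\overline{x},\overline{p}),\overline{y})$; (iv) $F$ is metrically regular with respect to $p$ uniformly in $x$ around $((\overline{x},\overline{p}),\overline{y})$; (v) $G$ is Lipschitz-like around $(\overline{x},-\overline{y})$. Then $S$ is metrically regular around $(\overline{p},\overline{x})$ and \[ \operatorname{reg}S(\overline{p},\overline{x})\le\widehat{\operatorname{reg}}_pF((\overline{x},\overline{p}),\overline{y})\cdot\big[\widehat{\operatorname{lip}}_xF((\overline{x},\overline{p}),\overline{y})+\operatorname{lip}G(\overline{x},-\overline{y})\big]. \]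
   Context: $B$ open balls, $\mathbb{D}_Y$ closed unit ball, $d(x,A)=\inf_{a\in A}\|x-a\|$, $d(x,\emptyset)=\infty$; products carry the sum norm. Write $F_p=F(\cdot,p)$, $F_x=F(x,\cdot)$. $(F,G)$ is locally sum-stable around $(\overline{x},\overline{p},\overline{y},\overline{z})$ (where $\overline{y}\in F(\overline{x},\overline{p})$, $\overline{z}\in G(\overline{x})$) if for every $\varepsilon>0$ there is $\delta>0$ such that for every $(x,p)\in B(\overline{x},\delta)\times B(\overline{p},\delta)$ and every $w\in(F_p+G)(x)\cap B(\overline{y}+\overline{z},\delta)$ there exist $y\in F_p(x)\cap B(\overline{y},\varepsilon)$ and $z\in G(x)\cap B(\overline{z},\varepsilon)$ with $w=y+z$. A multifunction $T$ is inner semicontinuous at $(a,b)\in\operatorname{Gr}T$ if for every open $D\ni b$ there is a neighborhood $U$ of $a$ with $T(a')\cap D\neq\emptyset$ for all $a'\in U$. $F$ is Lipschitz-like with respect to $x$ uniformly in $p$ around $((\overline{x},\overline{p}),\overline{y})$ with constant $L$ if there are neighborhoods $U$ of $\overline{x}$, $V$ of $\overline{p}$, $W$ of $\overline{y}$ such that $F_p(x)\cap W\subset F_p(u)+L\|x-u\|\mathbb{D}_Y$ for all $x,u\in U$, $p\in V$; $\widehat{\operatorname{lip}}_xF((\overline{x},\overline{p}),\overline{y})$ is the infimum of such $L$. $F$ is metrically regular with respect to $p$ uniformly in $x$ around $((\overline{x},\overline{p}),\overline{y})$ with constant $L$ if there are such neighborhoods with $d(p,F_x^{-1}(y))\le L\,d(y,F_x(p))$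 for all $(x,p,y)\in U\times V\times W$; $\widehat{\operatorname{reg}}_pF((\overline{x},\overline{p}),\overline{y})$ is the infimum of such $L$. $T:A\rightrightarrows B$ is Lipschitz-like around $(\overline{a},\overline{b})$ with constant $L$ if there are neighborhoods $U$ of $\overline{a}$, $V$ of $\overline{b}$ with $T(a)\cap V\subset T(u)+L\|a-u\|\mathbb{D}_B$ for all $a,u\in U$ ($\operatorname{lip}T(\overline{a},\overline{b})$ the infimum of such $L$); $T$ is metrically regular around $(\overline{a},\overline{b})$ with constant $L$ if there are neighborhoods $U,V$ with $d(a,T^{-1}(b))\le L\,d(b,T(a))$ for all $(a,b)\in U\times V$ ($\operatorname{reg}T(\overline{a},\overline{b})$ the infimum of such $L$). *)

(* Defs.v *)
From HB Require Import structures.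
From mathcomp Require Import all_boot all_order all_algebra.
From mathcomp Require Import all_classical all_reals all_analysis.
Set Implicit Arguments. Unset Strict Implicit. Unset Printing Implicit Defensive.
Import Order.TTheory GRing.Theory Num.Theory.
Import numFieldNormedType.Exports.
Local Open Scope classical_set_scope.
Local Open Scope ring_scope.

(* Set-valued maps A ⇉ B are functions A -> set B. *)

Section Defs.
Variable R : realType.

(* d(x,A) = inf_{a in A} |x - a|, with d(x, emptyset) = +oo *)
Definition dist (V : normedModType R) (x : V) (A : set V) : \bar R :=
  ereal_inf [set (`|x - a|)%:E | a in A].

Definition lipschitz_like (A B : normedModType R) (T : A -> set B)
    (a0 : A) (b0 : B) (L : R) : Prop :=
  exists r : R, 0 < r /\
    forall a u : A, `|a - a0| < r -> `|u - a0| < r ->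
    forall b : B, T a b -> `|b - b0| < r ->
    exists b' : B, T u b' /\ `|b - b'| <= L * `|a - u|.

Definition lip (A B : normedModType R) (T : A -> set B) (a0 : A) (b0 : B)
  : \bar R :=
  ereal_inf [set L%:E | L in [set L : R | 0 <= L /\ lipschitz_like T a0 b0 L]].

Definition metreg (A B : normedModType R) (T : A -> set B)
    (a0 : A) (b0 : B) (L : R) : Prop :=
  exists r : R, 0 < r /\
    forall (a : A) (b : B), `|a - a0| < r -> `|b - b0| < r ->
    (dist a [set a' | T a' b] <= L%:E * dist b (T a))%E.

Definition reg (A B : normedModType R) (T : A -> set B) (a0 : A) (b0 : B)
  : \bar R :=
  ereal_inf [set L%:E | L in [set L : R | 0 <= L /\ metreg T a0 b0 L]].

(* F : X x P ⇉ Y, written curried: F x p *)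
Definition lipschitz_like_x (X P Y : normedModType R) (F : X -> P -> set Y)
    (x0 : X) (p0 : P) (y0 : Y) (L : R) : Prop :=
  exists r : R, 0 < r /\
    forall (x u : X) (p : P), `|x - x0| < r -> `|u - x0| < r -> `|p - p0| < r ->
    forall y : Y, F x p y -> `|y - y0| < r ->
    exists y' : Y, F u p y' /\ `|y - y'| <= L * `|x - u|.

Definition lip_x (X P Y : normedModType R) (F : X -> P -> set Y)
    (x0 : X) (p0 : P) (y0 : Y) : \bar R :=
  ereal_inf [set L%:E | L in [set L : R | 0 <= L /\ lipschitz_like_x F x0 p0 y0 L]].

Definition metreg_p (X P Y : normedModType R) (F : X -> P -> set Y)
    (x0 : X) (p0 : P) (y0 : Y) (L : R) : Prop :=
  exists r : R, 0 < r /\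
    forall (x : X) (p : P) (y : Y),
    `|x - x0| < r -> `|p - p0| < r -> `|y - y0| < r ->
    (dist p [set p' | F x p' y] <= L%:E * dist y (F x p))%E.

Definition reg_p (X P Y : normedModType R) (F : X -> P -> set Y)
    (x0 : X) (p0 : P) (y0 : Y) : \bar R :=
  ereal_inf [set L%:E | L in [set L : R | 0 <= L /\ metreg_p F x0 p0 y0 L]].

Definition inner_sc (A B : normedModType R) (T : A -> set B) (a0 : A) (b0 : B)
  : Prop :=
  forall D : set B, open D -> D b0 ->
    \forall a \near a0, (T a `&` D) !=set0.

Definition sum_stable (X P Y : normedModType R) (F : X -> P -> set Y)
    (G : X -> set Y) (x0 : X) (p0 : P) (y0 z0 : Y) : Prop :=
  forall eps : R, 0 < eps -> exists delta : R, 0 < delta /\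
    forall (x : X) (p : P), `|x - x0| < delta -> `|p - p0| < delta ->
    forall w : Y, (exists y z, F x p y /\ G x z /\ w = y + z) ->
      `|w - (y0 + z0)| < delta ->
    exists y z, F x p y /\ `|y - y0| < eps /\ G x z /\ `|z - z0| < eps /\
      w = y + z.

Definition sol_map (X P Y : normedModType R) (F : X -> P -> set Y)
    (G : X -> set Y) : P -> set X :=
  fun p => [set x | exists y z, F x p y /\ G x z /\ y + z = 0].

End Defs.

(* Main.v *)
Require Import Defs.
From HB Require Import structures.
From mathcomp Require Import all_boot all_order all_algebra.
From mathcomp Require Import all_classical all_reals all_analysis.
From mathcomp Require Import ring lra.
Import Order.TTheory GRing.Theory Num.Theory.
Import numFieldNormedType.Exports.
Local Open Scope classical_set_scope.
Local Open Scope ring_scope.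
Set Implicit Arguments. Unset Strict Implicit. Unset Printing Implicit Defensive.

Section Helpers.
Variable R : realType.

Lemma dist_le (V : normedModType R) (x a : V) (A : set V) :
  A a -> (dist x A <= (`|x - a|)%:E)%E.
Proof. by move=> Aa; apply: ereal_inf_lbound; exists a. Qed.

Lemma dist_lt (V : normedModType R) (x : V) (A : set V) (c : R) :
  (dist x A < c%:E)%E -> exists a, A a /\ `|x - a| < c.
Proof. by move=> /ereal_inf_lt [_ [a Aa <-]]; rewrite lte_fin => h; exists a. Qed.

Lemma dist_sub (V : normedModType R) (x : V) (A B : set V) :
  A `<=` B -> (dist x B <= dist x A)%E.
Proof. by move=> AB; apply/ereal_infP => _ [a Aa <-]; apply: dist_le; apply: AB. Qed.

Lemma dist_scale (V : normedModType R) (x : V) (A : set V) (L : R) (D : \bar R) :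
  0 < L -> (forall a, A a -> (D <= (L * `|x - a|)%:E)%E) ->
  (D <= L%:E * dist x A)%E.
Proof.
move=> L0 H; rewrite /dist -ereal_inf_pZl //.
by apply/ereal_infP => _ [_ [a Aa <-] <-]; rewrite -EFinM; apply: H.
Qed.

End Helpers.

Section Key.
Variable R : realType.
Variables (X P Y : normedModType R).

Lemma key (F : X -> P -> set Y) (G : X -> set Y) (x0 : X) (p0 : P) (y0 : Y)
  (k l m : R) : 0 <= k -> 0 <= l -> 0 <= m ->
  F x0 p0 y0 -> G x0 (- y0) -> sum_stable F G x0 p0 y0 (- y0) ->
  lipschitz_like_x F x0 p0 y0 l -> metreg_p F x0 p0 y0 k ->
  lipschitz_like G x0 (- y0) m ->
  forall eps, 0 < eps -> metreg (sol_map F G) p0 x0 (k * (l + m) + eps).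
Proof.
move=> k0 l0 m0 Fx0 Gx0 SS [rL [rL0 HL]] [rF [rF0 HF]] [rG [rG0 HG]] eps eps0.
set e := Num.min rF (Num.min rL rG) / 2.
have hmin0 : 0 < Num.min rF (Num.min rL rG) by rewrite !lt_min rF0 rL0 rG0.
have h1 : Num.min rF (Num.min rL rG) <= rF by rewrite ge_min lexx.
have h2 : Num.min rF (Num.min rL rG) <= rL by rewrite ge_min ge_min lexx orbT.
have h3 : Num.min rF (Num.min rL rG) <= rG by rewrite ge_min ge_min lexx !orbT.
have e0 : 0 < e by rewrite /e; lra.
have eL : e < rL by rewrite /e; lra.
have eG : e < rG by rewrite /e; lra.
have eF : e <= rF / 2 by rewrite /e; lra.
have [d [d0 HS]] := SS e e0.
have q0 : 0 < rF / (4 * (m + 1)) by apply: divr_gt0 => //; lra.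
set r1 := Num.min (Num.min d rL) (Num.min rG (rF / (4 * (m + 1)))).
have r10 : 0 < r1 by rewrite !lt_min d0 rL0 rG0 q0.
have r1d : r1 <= d by rewrite !ge_min lexx.
have r1L : r1 <= rL by rewrite !ge_min lexx !orbT.
have r1G : r1 <= rG by rewrite !ge_min lexx !orbT.
have r1q : r1 <= rF / (4 * (m + 1)) by rewrite !ge_min lexx !orbT.
have r1F : m * (2 * r1) <= rF / 2.
  move: r1q; rewrite ler_pdivlMr; last lra.
  move=> h; nra.
have r1rF : r1 < rF.
  move: r1q; rewrite ler_pdivlMr; last lra.
  move=> h; nra.
have inner : forall x x' p, `|x - x0| < r1 -> `|x' - x0| < r1 -> `|p - p0| < r1 ->
    sol_map F G p x' ->
    (dist p [set p' | sol_map F G p' x] <= (k * (l + m) * `|x - x'|)%:E)%E.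
  move=> x x' p hx hx' hp [y [z [Fy [Gz yz]]]].
  have [y2 [z2 [Fy2 [hy2 [Gz2 [hz2 w0]]]]]] : exists y z, F x' p y /\ `|y - y0| < e /\
     G x' z /\ `|z - - y0| < e /\ 0 = y + z.
    apply: HS; [lra|lra| by exists y, z | by rewrite subrr subr0 normr0].
  have [y1 [Fy1 hy1]] := HL x' x p (lt_le_trans hx' r1L) (lt_le_trans hx r1L)
    (lt_le_trans hp r1L) y2 Fy2 (lt_trans hy2 eL).
  have [z1 [Gz1 hz1]] := HG x' x (lt_le_trans hx' r1G) (lt_le_trans hx r1G)
    z2 Gz2 (lt_trans hz2 eG).
  have hdx : `|x' - x| <= 2 * r1.
    apply: le_trans (ler_distD x0 x' x) _; rewrite (distrC x0); lra.
  have hmz : `|- z1 - y0| < rF.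
    have -> : - z1 - y0 = (z2 - z1) - (z2 - - y0).
      by rewrite opprK opprD addrACA subrr add0r.
    apply: le_lt_trans (ler_normB _ _) _.
    have : m * `|x' - x| <= m * (2 * r1) by apply: ler_wpM2l.
    lra.
  have HF' := HF x p (- z1) (lt_trans hx r1rF) (lt_trans hp r1rF) hmz.
  have hsub : [set p' | F x p' (- z1)] `<=` [set p' | sol_map F G p' x].
    by move=> p' Fp'; exists (- z1), z1; split=> //; split=> //; rewrite addNr.
  apply: le_trans (dist_sub p hsub) _.
  apply: le_trans HF' _.
  have hd : (dist (- z1)%R (F x p) <= ((l + m) * `|x - x'|)%:E)%E.
    apply: le_trans (dist_le _ Fy1) _; rewrite lee_fin.
    have -> : - z1 - y1 = (y2 - y1) + (z2 - z1).
      by rewrite addrACA -w0 add0r addrC.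
    apply: le_trans (ler_normD _ _) _.
    rewrite (distrC x) mulrDl; exact: lerD.
  rewrite -mulrA EFinM; apply: lee_wpmul2l => //; by rewrite lee_fin.
set K := k * (l + m).
have K0 : 0 <= K by rewrite /K; apply: mulr_ge0 => //; lra.
have q1 : 0 < (K + eps) * r1 / (2 * (K + 2)).
  by apply: divr_gt0; [apply: mulr_gt0|]; lra.
set r := Num.min (r1 / 2) ((K + eps) * r1 / (2 * (K + 2))).
have r0 : 0 < r by rewrite lt_min q1 andbT; lra.
have rr1 : r <= r1 / 2 by rewrite ge_min lexx.
have rq : r <= (K + eps) * r1 / (2 * (K + 2)) by rewrite ge_min lexx orbT.
have rq' : r * (2 * (K + 2)) <= (K + eps) * r1.
  by move: rq; rewrite ler_pdivlMr //; lra.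
have S0 : sol_map F G p0 x0 by exists y0, (- y0); split=> //; split=> //; rewrite subrr.
exists r; split=> // p x hp hx.
apply: dist_scale; first lra.
move=> x' Sx'.
case: (ltP `|x - x'| (r1 / 2)) => hxx'.
  have hx' : `|x' - x0| < r1.
    apply: le_lt_trans (ler_distD x x' x0) _; rewrite (distrC x'); lra.
  apply: le_trans (inner x x' p ltac:(lra) hx' ltac:(lra) Sx') _.
  rewrite lee_fin; apply: ler_wpM2r => //; rewrite /K; lra.
have hin := inner x x0 p0 ltac:(lra) ltac:(by rewrite subrr normr0) ltac:(by rewrite subrr normr0) S0.
have : (dist p0 [set p' | sol_map F G p' x] < (K * `|x - x0| + r)%:E)%E.
  by apply: le_lt_trans hin _; rewrite lte_fin /K; lra.
move=> /dist_lt [p' [Sp' hp']].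
apply: le_trans (dist_le _ Sp') _; rewrite lee_fin.
have hKx : K * `|x - x0| <= K * r by apply: ler_wpM2l => //; lra.
have := ler_distD p0 p p'.
have : (K + eps) * (r1 / 2) <= (K + eps) * `|x - x'| by apply: ler_wpM2l => //; lra.
nra.
Qed.
End Key.

Theorem theorem4p12 (R : realType) (X P Y : completeNormedModType R)
    (F : X -> P -> set Y) (G : X -> set Y) (x0 : X) (p0 : P) (y0 : Y) :
  F x0 p0 y0 -> G x0 (- y0) ->
  sum_stable F G x0 p0 y0 (- y0) ->
  (exists r : R, 0 < r /\ forall x : X, `|x - x0| < r -> inner_sc (F x) p0 y0) ->
  (exists L : R, 0 <= L /\ lipschitz_like_x F x0 p0 y0 L) ->
  (exists L : R, 0 <= L /\ metreg_p F x0 p0 y0 L) ->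
  (exists L : R, 0 <= L /\ lipschitz_like G x0 (- y0) L) ->
  (exists L : R, 0 <= L /\ metreg (sol_map F G) p0 x0 L) /\
  (reg (sol_map F G) p0 x0 <=
     reg_p F x0 p0 y0 * (lip_x F x0 p0 y0 + lip G x0 (- y0)%R))%E.
Proof.
move=> Fx0 Gx0 SS _ [l0 [l00 HL0]] [k0 [k00 HK0]] [m0 [m00 HM0]].
split.
  exists (k0 * (l0 + m0) + 1); split.
    have : 0 <= k0 * (l0 + m0) by apply: mulr_ge0 => //; lra.
    lra.
  exact: (key k00 l00 m00 Fx0 Gx0 SS HL0 HK0 HM0 ltr01).
set A := [set L : R | 0 <= L /\ metreg_p F x0 p0 y0 L].
set B := [set L : R | 0 <= L /\ lipschitz_like_x F x0 p0 y0 L].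
set C := [set L : R | 0 <= L /\ lipschitz_like G x0 (- y0) L].
have lA : lbound A 0 by move=> z [].
have lB : lbound B 0 by move=> z [].
have lC : lbound C 0 by move=> z [].
have nA : A !=set0 by exists k0.
have nB : B !=set0 by exists l0.
have nC : C !=set0 by exists m0.
have eA : reg_p F x0 p0 y0 = (inf A)%:E.
  by rewrite /reg_p ereal_inf_EFin //; exists 0.
have eB : lip_x F x0 p0 y0 = (inf B)%:E.
  by rewrite /lip_x ereal_inf_EFin //; exists 0.
have eC : lip G x0 (- y0) = (inf C)%:E.
  by rewrite /lip ereal_inf_EFin //; exists 0.
rewrite eA eB eC -EFinD -EFinM.
have a0 : 0 <= inf A by apply: lb_le_inf.
have b0 : 0 <= inf B by apply: lb_le_inf.
have c0 : 0 <= inf C by apply: lb_le_inf.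
apply/lee_addgt0Pr => dl dl0.
set D := 2 * inf A + inf B + inf C + 3 + dl.
have D0 : 0 < D by rewrite /D; lra.
set t := dl / D.
have t0 : 0 < t by apply: divr_gt0.
have tD : t * D = dl by rewrite /t mulrC mulrCA mulfV ?mulr1 //; lra.
have [k [k0' Hk] hk] := inf_adherent t0 (conj nA (ex_intro _ 0 lA)).
have [l [l0' Hl] hl] := inf_adherent t0 (conj nB (ex_intro _ 0 lB)).
have [m [m0' Hm] hm] := inf_adherent t0 (conj nC (ex_intro _ 0 lC)).
have Hreg := key k0' l0' m0' Fx0 Gx0 SS Hl Hk Hm t0.
have Hle : (reg (sol_map F G) p0 x0 <= (k * (l + m) + t)%:E)%E.
  apply: ereal_inf_lbound; exists (k * (l + m) + t) => //; split=> //.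
  have : 0 <= k * (l + m) by apply: mulr_ge0 => //; lra.
  lra.
apply: le_trans Hle _.
rewrite -EFinD lee_fin.
have h1 : k * (l + m) <= (inf A + t) * (l + m) by apply: ler_wpM2r; lra.
have h2 : (inf A + t) * (l + m) <= (inf A + t) * (inf B + inf C + 2 * t).
  by apply: ler_wpM2l; lra.
have t1 : t <= 1 by rewrite /D in tD; nra.
rewrite /D in tD; nra.
Qed.
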